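(* Fix a vocabulary $(Pred, Cons, Var)$ and a natural number $k$. The following formulas are valid with respect to the class of all $k$-sight models: (1) $\mathsf{D}^k z t \to K_z t$, for every variable $z\in\{x,y\}$ and every term $t$; (2) $(K_z\mathcal{T}\land P(t_1,t_2,\ldots,t_m))\to K_z P(t_1,t_2,\ldots,t_m)$, for every $z\in\{x,y\}$, every $m$-ary $P\in Pred$ and every set of terms $\mathcal{T}$ with $\{t_1,\ldots,t_m\}\subseteq \mathcal{T}$.
   Context: Vocabulary: $Pred$ is a set of predicate symbols with arities containing a binary symbol $R$; $Cons$ is a nonempty finite set of constants; $Var=\{x,y\}$. Terms are elements of $\mathsf{Term}=Cons\cup Var$. Formulas are built from atoms $P(t_1,\dots,t_m)$ and $t_1\equiv t_2$ ($t_i$ terms) using $\neg,\land$, the operators $K_z t$ (''$z$ knows the value of $t$''), $K_z\varphi$ and $[z]\varphi$ for $z\in Var$ (only the static part is needed here). For a set $\mathcal{T}$ of terms, $K_z\mathcal{T}:=\bigwedge_{t\in\mathcal{T}}K_zt$. The formulas $\mathsf{D}^n t_1t_2$ are defined by $\mathsf{D}^0t_1t_2:=t_1\equiv t_2$ and $\mathsf{D}^{n+1}t_1t_2:=\mathsf{D}^nt_1t_2\lor\bigvee_{t\in \mathsf{Term}}(\mathsf{D}^nt_1t\land(Rtt_2\lor Rt_2t))$. A model is $M=(\mathbf{D},\mathbf{I},\Sigma,\sim)$ where $\mathbf{D}$ is a nonempty finite set; $\mathbf{I}$ assigns to each $m$-ary $P$ a relation $\mathbf{I}(P)\subseteq\mathbf{D}^m$,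 with $\mathbf{R}:=\mathbf{I}(R)$ serial (every $s\in\mathbf{D}$ has some $t$ with $(s,t)\in\mathbf{R}$), and to each $c\in Cons$ an element $\mathbf{I}(c)\in\mathbf{D}$ such that every element of $\mathbf{D}$ is $\mathbf{I}(c)$ for some $c$; $\Sigma\subseteq\mathbf{D}^{Var}$ is a nonempty set of assignments (situations); $\sim_x,\sim_y$ are equivalence relations on $\Sigma$. For $s\in\mathbf{D}$ let $\mathbb{D}^0(s)=\{s\}$ and $\mathbb{D}^{m+1}(s)=\mathbb{D}^m(s)\cup\{t\in\mathbf{D}:\exists u\in\mathbb{D}^m(s),\ (u,t)\in\mathbf{R}\text{ or }(t,u)\in\mathbf{R}\}$. $M$ is a $k$-sight model if whenever $z\in Var$, $\sigma,\sigma'\in\Sigma$, $\sigma\sim_z\sigma'$, then $\sigma(z')=\sigma'(z')$ for every $z'\in Var$ with $\sigma(z')\in\mathbb{D}^k(\sigma(z))$. Semantics: $t^{(\mathbf{I},\sigma)}$ is $\mathbf{I}(t)$ for a constant and $\sigma(t)$ for a variable. $M,\sigma\models P(t_1,\dots,t_m)$ iff $(t_1^{(\mathbf{I},\sigma)},\dots,t_m^{(\mathbf{I},\sigma)})\in\mathbf{I}(P)$; $M,\sigma\models t_1\equiv t_2$ iff $t_1^{(\mathbf{I},\sigma)}=t_2^{(\mathbf{I},\sigma)}$; Boolean clauses as usual; $M,\sigma\models K_zt$ iff $t^{(\mathbf{I},\sigma)}=t^{(\mathbf{I},\sigma')}$ for all $\sigma'\in\Sigma$ with $\sigma'\sim_z\sigma$;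 $M,\sigma\models K_z\varphi$ iff $M,\sigma'\models\varphi$ for all $\sigma'\in\Sigma$ with $\sigma'\sim_z\sigma$. A formula is valid (w.r.t. $k$-sight models) if it is true at every situation of every $k$-sight model. *)

(* Defs.v *)
From mathcomp Require Import all_boot.
Set Implicit Arguments.
Unset Strict Implicit.
Unset Printing Implicit Defensive.

Record Vocab := {
  Pred : Type;
  arity : Pred -> nat;
  RP : Pred;
  RP_bin : arity RP = 2;
  Cons : finType;
  cons0 : Cons
}.

Inductive Var := vx | vy.

Section Syntax.
Variable V : Vocab.

Inductive Term := TC of Cons V | TV of Var.

Definition allTerms : seq Term := map TC (enum (Cons V)) ++ [:: TV vx; TV vy].

(* static fragment of the language; the dynamic operator [z]phi is not
   needed for the statement and is omitted *)
Inductive form :=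
| Atom of Pred V & seq Term
| Eq of Term & Term
| Neg of form
| And of form & form
| Kt of Var & Term
| Kf of Var & form.

Definition Top : form := Eq (TV vx) (TV vx).
Definition Bot : form := Neg Top.
Definition Or (a b : form) : form := Neg (And (Neg a) (Neg b)).
Definition Imp (a b : form) : form := Neg (And a (Neg b)).
Definition bigAnd (l : seq form) : form := foldr And Top l.
Definition bigOr (l : seq form) : form := foldr Or Bot l.

(* K_z T := /\_{t in T} K_z t, for a (finite) set of terms given as a list *)
Definition KtSet (z : Var) (T : seq Term) : form := bigAnd (map (Kt z) T).

Definition Rat (t1 t2 : Term) : form := Atom (RP V) [:: t1; t2].

Fixpoint Dn (n : nat) (t1 t2 : Term) : form :=
  match n with
  | 0 => Eq t1 t2
  | n'.+1 => Or (Dn n' t1 t2)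
               (bigOr [seq And (Dn n' t1 t) (Or (Rat t t2) (Rat t2 t)) | t <- allTerms])
  end.
End Syntax.

Record model (V : Vocab) := {
  Dom : finType;
  dom0 : Dom;
  IP : Pred V -> seq Dom -> Prop;
  IP_arity : forall P l, IP P l -> size l = arity P;
  Rrel : Dom -> Dom -> Prop := fun s t => IP (RP V) [:: s; t];
  R_serial : forall s, exists t, Rrel s t;
  IC : Cons V -> Dom;
  IC_surj : forall d, exists c, IC c = d;
  Sigma : (Var -> Dom) -> Prop;
  Sigma_ne : exists s, Sigma s;
  sim : Var -> (Var -> Dom) -> (Var -> Dom) -> Prop;
  sim_refl : forall z s, Sigma s -> sim z s s;
  sim_sym : forall z s s', Sigma s -> Sigma s' -> sim z s s' -> sim z s' s;
  sim_trans : forall z s1 s2 s3, Sigma s1 -> Sigma s2 -> Sigma s3 ->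
                sim z s1 s2 -> sim z s2 s3 -> sim z s1 s3
}.

Section Semantics.
Variables (V : Vocab) (M : model V).

(* 𝔻^m(s) as a predicate: Dball m s t  <->  t ∈ 𝔻^m(s) *)
Fixpoint Dball (m : nat) (s t : Dom M) : Prop :=
  match m with
  | 0 => t = s
  | m'.+1 => Dball m' s t \/
             exists u, Dball m' s u /\ (@Rrel V M u t \/ @Rrel V M t u)
  end.

Definition ksight (k : nat) : Prop :=
  forall (z : Var) (s s' : Var -> Dom M), @Sigma V M s -> @Sigma V M s' -> @sim V M z s s' ->
  forall z' : Var, Dball k (s z) (s z') -> s z' = s' z'.

Definition teval (s : Var -> Dom M) (t : Term V) : Dom M :=
  match t with TC c => @IC V M c | TV v => s v end.

Fixpoint sat (s : Var -> Dom M) (f : form V) : Prop :=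
  match f with
  | Atom P ts => @IP V M P (map (teval s) ts)
  | Eq t1 t2 => teval s t1 = teval s t2
  | Neg g => ~ sat s g
  | And g h => sat s g /\ sat s h
  | Kt z t => forall s', @Sigma V M s' -> @sim V M z s' s -> teval s t = teval s' t
  | Kf z g => forall s', @Sigma V M s' -> @sim V M z s' s -> sat s' g
  end.
End Semantics.

Definition valid_ksight (V : Vocab) (k : nat) (f : form V) : Prop :=
  forall M : model V, ksight M k -> forall s, @Sigma V M s -> sat s f.

(* Main.v *)
Require Import Defs.
From Stdlib Require Lists.List.
From Stdlib Require Import Classical.
From mathcomp Require Import all_boot.

Section Aux.
Variables (V : Vocab) (M : model V).

Lemma sat_Or (s : Var -> Dom M) (a b : form V) :
  sat s (Or a b) -> sat s a \/ sat s b.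
Proof. simpl => H. apply NNPP => H'. apply H. split => ?; apply H'; auto. Qed.

Lemma sat_bigOr (s : Var -> Dom M) (l : seq (form V)) :
  sat s (bigOr l) -> exists f, Stdlib.Lists.List.In f l /\ sat s f.
Proof.
elim: l => [|a l IH] /=.
  by move=> H; exfalso; apply H.
move/(@sat_Or _ _ _) => [H|H]; first by exists a; auto.
by case: (IH H) => f [? ?]; exists f; auto.
Qed.

Lemma sat_bigAnd (s : Var -> Dom M) (l : seq (form V)) :
  sat s (bigAnd l) -> forall f, Stdlib.Lists.List.In f l -> sat s f.
Proof.
elim: l => [|a l IH] //= [Ha Hl] f [<-|Hf]; auto.
Qed.

Lemma Dn_ball n (s : Var -> Dom M) (t1 t : Term V) :
  sat s (Dn n t1 t) -> Dball n (teval s t1) (teval s t).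
Proof.
elim: n t => [|n IH] t /=.
  by move=> ->.
move/(@sat_Or _ _ _) => [H|H]; first by left; apply IH.
right. case: (@sat_bigOr _ _ H) => f [Hin Hf].
case: (proj1 (Stdlib.Lists.List.in_map_iff _ _ _) Hin) => t' [Ht' _]; subst f.
case: Hf => H1 H2. exists (teval s t'); split; first by apply IH.
by case: (@sat_Or s (Rat t' t) (Rat t t') H2) => ?; [left|right].
Qed.
End Aux.

Theorem fact2 (V : Vocab) (k : nat) :
  (forall (z : Var) (t : Term V),
      valid_ksight k (Imp (Dn k (TV V z) t) (Kt z t)))
  /\
  (forall (z : Var) (P : Pred V) (ts : seq (Term V)) (T : seq (Term V)),
      size ts = arity P ->
      (forall t, Stdlib.Lists.List.In t ts -> Stdlib.Lists.List.In t T) ->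
      valid_ksight k (Imp (And (KtSet z T) (Atom P ts)) (Kf z (Atom P ts)))).
Proof.
split.
- move=> z t M Hk s Hs /= [HD HK]; apply HK => s' Hs' Hsim.
  have Hb := @Dn_ball _ _ _ _ _ _ HD.
  clear HK HD; case: t Hb => [c|z'] //= Hb.
  apply: (Hk z s s' Hs Hs' _ z' Hb).
  exact: sim_sym.
- move=> z P ts T _ Hsub M Hk s Hs /= [[HT HP] HK]; apply HK => s' Hs' Hsim.
  suff -> : map (teval s') ts = map (teval s) ts by [].
  have Ht : forall t, Stdlib.Lists.List.In t ts -> teval s' t = teval s t.
    move=> t Hin; symmetry.
    have := @sat_bigAnd _ _ _ _ HT _ (Stdlib.Lists.List.in_map (Kt z) _ _ (Hsub t Hin)).
    by move/(_ s' Hs' Hsim).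
  clear HP HK Hsub; elim: ts Ht => [|a l IH] //= Ht.
  by rewrite Ht; [rewrite IH // => t Hin; apply Ht; right | left].
Qed.
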